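(* Consider a deterministic solution of the Marker Problem with $K=1$ round of $T$ steps tolerating $f$ faults. For $n\in[N]$ let $X(n)$ be the set of processes that send or receive at least one message during the $T$ steps of the execution in which all processes are honest and the initially marked process $P_1$ receives input $I_1=n$. Let $n_1,n_2\in[N]\setminus\{1\}$ with $n_1\neq n_2$, and $D=X(n_1)\cap X(n_2)$. Then either (i) $P_{n_1}\in X(n_2)$ or $P_{n_2}\in X(n_1)$, or (ii) $|D|\ge f-1$.
   Context: Model. There are $N$ processes $P_1,\dots,P_N$; $[N]=\{1,\dots,N\}$. Time proceeds in discrete steps $t=0,1,2,\dots$ (synchronous network). At each step every process first receives all messages sent to it at the previous step, each together with the identity of its sender, and then may send messages to any processes; the behaviour of an honest process is given by its protocol, a deterministic function of its inputs and of all messages it has received so far. Communication is authenticated: a process $P_j$ can sign a string $m$, producing $(m)_{P_j}$; every sent message is signed by its sender; no process other than $P_j$ can produce a string containing $(m)_{P_j}$ unless it copied it from a message it received, except that corrupted processes can produce signatures of any corrupted process. An $f$-adversary knows all protocols and all inputs (including future inputs), chooses at time $0$ a set of at most $f$ processes to corrupt, and makes them behave arbitrarily subject to the signature rule; the other processes are honest and follow their protocol. $\mathcal H$ denotes the set of honest processes. A protocol tolerates $f$ faults if its required properties hold against every $f$-adversary. Marker Problem ($K$ rounds of $T$ steps). Time is divided into $K$ consecutive rounds of $T$ steps. At the end of each round every honest process decides either ''unmarked'' or ''marked, with previous marked process $d$'' where $d\in[N]\cup\{\perp\}$. The marked process $M$ of round $1$ is $P_1$ if $P_1\in\mathcal H$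 and $\perp$ otherwise; the marked process of round $i+1$ is the honest process that decided ''marked'' at the end of round $i$, or $\perp$ if there is none. At the beginning of round $i$, if $M\neq\perp$, $M$ receives an input $I_i\in[N]$ (''send the marker to $P_{I_i}$''). Required at the end of every round $i$: (consistency) at most one honest process decides it is marked; (liveness) if $M\in\mathcal H$, $I_i=n$ and $P_n\in\mathcal H$, then $P_n$ decides it is marked with previous marked process $M$; (non-impersonation) if $M=\perp$ and an honest process decides it is marked with previous marked process $d$, then $d\notin\mathcal H$. *)

(* Defs.v *)
From Stdlib Require List.
From mathcomp Require Import all_boot.

Set Implicit Arguments.
Unset Strict Implicit.
Unset Printing Implicit Defensive.

Section Model.
Variable N : nat.
(* Processes P_1 .. P_N are the elements of 'I_N; P_1 is a distinguished
   index (in the theorem, the one with value 0). *)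
Notation proc := 'I_N.

Inductive msg : Type :=
  | Leaf of nat
  | Pair of msg & msg
  | Sig of proc & msg.

Inductive subterm : msg -> msg -> Prop :=
  | st_refl m : subterm m m
  | st_pairl x a b : subterm x a -> subterm x (Pair a b)
  | st_pairr x a b : subterm x b -> subterm x (Pair a b)
  | st_sig x p a : subterm x a -> subterm x (Sig p a).

(* What a process receives at one step: for each sender, the list of
   messages that sender sent to it at the previous step. *)
Definition inbox := proc -> seq msg.

(* A view (local history) is the list of inboxes of steps 0, 1, ..., k-1. *)
Definition view := seq inbox.

(* A schedule: [s t p q] = messages sent at step t by p to q. *)
Definition sched := nat -> proc -> proc -> seq msg.

Inductive decision : Type :=
  | Unmarked
  | Marked of option proc.   (* Marked d : previous marked process d (None = ⊥) *)

Definition is_marked (d : decision) : bool :=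
  if d is Marked _ then true else false.

(* A deterministic protocol: what process p sends (to each recipient) given
   its input and its view so far, and its decision at the end of the round. *)
Record protocol : Type := Protocol {
  send : proc -> option proc -> view -> proc -> seq msg;
  decide : proc -> option proc -> view -> decision }.

(* The strings a process can copy: every message m received from sender s
   is signed by s, i.e. received as (m)_s, together with all its substrings. *)
Definition known (v : view) (x : msg) : Prop :=
  exists k s m, k < size v /\ List.In m (nth (fun _ => [::]) v k s) /\ subterm x (Sig s m).

Definition can_produce (C : {set proc}) (p : proc) (v : view) (m : msg) : Prop :=
  forall q m', subterm (Sig q m') m ->
    q = p \/ (p \in C /\ q \in C) \/ known v (Sig q m').

Definition respects_sig (Pi : protocol) : Prop :=
  forall p i v r m, List.In m (send Pi p i v r) -> can_produce set0 p v m.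

(* Inbox of q at step t (messages sent at step t-1; nothing at step 0). *)
Definition inbox_at (s : sched) (t : nat) (q : proc) : inbox :=
  fun sdr => if t is t'.+1 then s t' sdr q else [::].

Definition view_of (s : sched) (q : proc) (k : nat) : view :=
  [seq inbox_at s t q | t <- iota 0 k].

Definition input (P1 : proc) (I : proc) (p : proc) : option proc :=
  if p == P1 then Some I else None.

Definition is_execution (P1 : proc) (Pi : protocol) (T : nat) (C : {set proc})
    (I : proc) (s : sched) : Prop :=
  forall t, t < T -> forall p,
    (p \notin C -> forall r, s t p r = send Pi p (input P1 I p) (view_of s p t.+1) r) /\
    (p \in C -> forall r m, List.In m (s t p r) -> can_produce C p (view_of s p t.+1) m).

Definition dec (P1 : proc) (Pi : protocol) (T : nat) (I : proc) (s : sched)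
    (p : proc) : decision :=
  decide Pi p (input P1 I p) (view_of s p T).

Definition solves (P1 : proc) (Pi : protocol) (T f : nat) : Prop :=
  respects_sig Pi /\
  forall (C : {set proc}) (I : proc) (s : sched),
    #|C| <= f -> is_execution P1 Pi T C I s ->
    [/\
        (forall p q, p \notin C -> q \notin C ->
           is_marked (dec P1 Pi T I s p) -> is_marked (dec P1 Pi T I s q) -> p = q),
        (P1 \notin C -> I \notin C -> dec P1 Pi T I s I = Marked (Some P1))
      &
        (P1 \in C -> forall p d, p \notin C ->
           dec P1 Pi T I s p = Marked (Some d) -> d \in C)].

Definition X (T : nat) (s : sched) : {set proc} :=
  [set p | [exists t : 'I_T, exists q : proc,
     (0 < size (s t p q)) || ((t.+1 < T) && (0 < size (s t q p)))]].

End Model.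

(* Main.v *)
Require Import Defs.
From mathcomp Require Import all_boot.
From mathcomp Require Import zify.
From Stdlib Require Import FunctionalExtensionality.

Lemma In_catl (T : Type) (x : T) (a b : seq T) : List.In x a -> List.In x (a ++ b).
Proof. elim: a => //= y a IH [->|H]; [left | right; apply IH]; done. Qed.

Lemma In_catr (T : Type) (x : T) (a b : seq T) : List.In x b -> List.In x (a ++ b).
Proof. elim: a => //= y a IH H; right; apply IH; done. Qed.

Lemma In_cat_or (T : Type) (x : T) (a b : seq T) :
  List.In x (a ++ b) -> List.In x a \/ List.In x b.
Proof.
elim: a => //= [|y a IH]; first by right.
case=> [->|H]; first by left; left.
by case: (IH H); [left; right | right].
Qed.

Lemma notX_send N T (s : sched N) p q t : t < T -> p \notin X T s -> s t p q = [::].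
Proof.
move=> ht hp; case E: (s t p q) => [|m l] //; exfalso; move/negP: hp; apply.
rewrite /X inE; apply/existsP; exists (Ordinal ht); apply/existsP; exists q.
by rewrite /= E.
Qed.

Lemma notX_recv N T (s : sched N) p q t : t.+1 < T -> p \notin X T s -> s t q p = [::].
Proof.
move=> ht hp; case E: (s t q p) => [|m l] //; exfalso; move/negP: hp; apply.
rewrite /X inE; apply/existsP; exists (Ordinal (ltnW ht)); apply/existsP; exists q.
by rewrite /= E ht orbT.
Qed.

Arguments notX_send {N T s p q t}.
Arguments notX_recv {N T s p q t}.

Lemma view_eq N (s s' : sched N) p k :
  (forall t sdr, t.+1 < k -> s t sdr p = s' t sdr p) -> view_of s p k = view_of s' p k.
Proof.
move=> H; rewrite /view_of; apply/eq_in_map => t; rewrite mem_iota add0n => /andP[_ ht].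
rewrite /inbox_at; case: t ht => [|t] ht //.
apply: functional_extensionality => sdr; exact: H.
Qed.

Theorem mainTheorem6 (N T f : nat) (P1 : 'I_N) (hP1 : nat_of_ord P1 = 0)
    (Pi : protocol N) (n1 n2 : 'I_N) (s1 s2 : sched N) :
  solves P1 Pi T f ->
  is_execution P1 Pi T set0 n1 s1 ->
  is_execution P1 Pi T set0 n2 s2 ->
  n1 != P1 -> n2 != P1 -> n1 != n2 ->
  (n1 \in X T s2 \/ n2 \in X T s1) \/ (f - 1 <= #|X T s1 :&: X T s2|)%N.
Proof.
move=> [hsig hsol] e1 e2 h1 h2 h12.
case: (boolP (n1 \in X T s2)) => [H|hn1]; first by left; left.
case: (boolP (n2 \in X T s1)) => [H|hn2]; first by left; right.
right; rewrite leqNgt; apply/negP => hD.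
pose C := P1 |: (X T s1 :&: X T s2).
have hC : #|C| <= f.
  have : #|C| <= #|X T s1 :&: X T s2|.+1 by rewrite cardsU1; case: (_ \notin _).
  lia.
have hDC : forall p, p \in X T s1 -> p \in X T s2 -> p \in C.
  by move=> p a b; rewrite in_setU1 in_setI a b orbT.
have P1C : P1 \in C by rewrite setU11.
pose s : sched N := fun t p q =>
  if p \in C then (if q \in C then s1 t p q ++ s2 t p q
                   else if q \in X T s2 then s2 t p q else s1 t p q)
  else if p \in X T s1 then s1 t p q else if p \in X T s2 then s2 t p q else [::].
have inbox1 : forall t sdr p, t.+1 < T -> p \notin C -> p \notin X T s2 ->
    s t sdr p = s1 t sdr p.
  move=> t sdr p ht pC p2; rewrite /s; case: ifP => sdrC.
    by rewrite (negbTE pC) (negbTE p2).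
  case: ifP => sd1 //; case: ifP => sd2.
    by rewrite (notX_recv ht p2) (notX_send (ltnW ht) (negbT sd1)).
  by rewrite (notX_send (ltnW ht) (negbT sd1)).
have inbox2 : forall t sdr p, t.+1 < T -> p \notin C -> p \notin X T s1 ->
    s t sdr p = s2 t sdr p.
  move=> t sdr p ht pC p1; rewrite /s; case: ifP => sdrC.
    rewrite (negbTE pC); case: ifP => p2 //.
    by rewrite (notX_recv ht p1) (notX_recv ht (negbT p2)).
  case: ifP => sd1.
    have sd2 : sdr \notin X T s2 by apply/negP => H; rewrite hDC in sdrC.
    by rewrite (notX_recv ht p1) (notX_send (ltnW ht) sd2).
  case: ifP => sd2 //.
  by rewrite (notX_send (ltnW ht) (negbT sd2)).
have known1 : forall c k x, c \in C -> k <= T ->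
    known (view_of s1 c k) x -> known (view_of s c k) x.
  move=> c k x cC hk [kk [sd [m [hkk [hin hsub]]]]].
  rewrite size_map size_iota in hkk.
  exists kk, sd, m; split; first by rewrite size_map size_iota.
  split => //.
  move: hin; rewrite /view_of (nth_map 0) ?size_iota // (nth_map 0) ?size_iota //.
  rewrite nth_iota // add0n /inbox_at; case: kk hkk {hsub} => [|k'] hkk //.
  have k'T : k' < T by lia.
  rewrite /s cC; case: ifP => sdC; first exact: In_catl.
  case: ifP => sd1 // H.
  by rewrite (notX_send k'T (negbT sd1)) in H.
have known2 : forall c k x, c \in C -> k <= T ->
    known (view_of s2 c k) x -> known (view_of s c k) x.
  move=> c k x cC hk [kk [sd [m [hkk [hin hsub]]]]].
  rewrite size_map size_iota in hkk.
  exists kk, sd, m; split; first by rewrite size_map size_iota.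
  split => //.
  move: hin; rewrite /view_of (nth_map 0) ?size_iota // (nth_map 0) ?size_iota //.
  rewrite nth_iota // add0n /inbox_at; case: kk hkk {hsub} => [|k'] hkk //.
  have k'T : k' < T by lia.
  rewrite /s cC; case: ifP => sdC; first exact: In_catr.
  case: ifP => sd1 H.
    have sd2 : sd \notin X T s2 by apply/negP => H2; rewrite hDC in sdC.
    by rewrite (notX_send k'T sd2) in H.
  case: ifP H => sd2 // H.
  by rewrite (notX_send k'T (negbT sd2)) in H.
have n0 : forall p, p \notin (set0 : {set 'I_N}) by move=> p; rewrite in_set0.
have hex : is_execution P1 Pi T C n1 s.
  move=> t ht p; split.
  - move=> pC r.
    have pP1 : p != P1 by apply: contra pC => /eqP->.
    have inp : forall I, input P1 I p = None by move=> I; rewrite /input (negbTE pP1).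
    case: (boolP (p \in X T s1)) => p1.
      have p2 : p \notin X T s2 by apply/negP => H; rewrite hDC in pC.
      have v : view_of s p t.+1 = view_of s1 p t.+1.
        by apply: view_eq => t' sdr h; apply: inbox1 => //; apply: leq_trans h ht.
      rewrite v inp -(inp n1) -((e1 t ht p).1 (n0 p) r) /s (negbTE pC) p1 //.
    case: (boolP (p \in X T s2)) => p2.
      have v : view_of s p t.+1 = view_of s2 p t.+1.
        by apply: view_eq => t' sdr h; apply: inbox2 => //; apply: leq_trans h ht.
      rewrite v inp -(inp n2) -((e2 t ht p).1 (n0 p) r) /s (negbTE pC) (negbTE p1) p2 //.
    have v : view_of s p t.+1 = view_of s1 p t.+1.
      by apply: view_eq => t' sdr h; apply: inbox1 => //; apply: leq_trans h ht.
    rewrite v inp -(inp n1) -((e1 t ht p).1 (n0 p) r) /s (negbTE pC) (negbTE p1) (negbTE p2).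
    by rewrite (notX_send ht p1).
  - move=> pC r m hm.
    have [hm1|hm2] : List.In m (s1 t p r) \/ List.In m (s2 t p r).
      move: hm; rewrite /s pC; case: ifP => rC.
        exact: In_cat_or.
      by case: ifP => _ H; [right|left].
    + rewrite ((e1 t ht p).1 (n0 p) r) in hm1.
      have cp := hsig _ _ _ _ _ hm1.
      move=> q m' hsub; case: (cp q m' hsub) => [->|[[H _]|hk]]; first by left.
        by rewrite in_set0 in H.
      by right; right; apply: known1 hk.
    + rewrite ((e2 t ht p).1 (n0 p) r) in hm2.
      have cp := hsig _ _ _ _ _ hm2.
      move=> q m' hsub; case: (cp q m' hsub) => [->|[[H _]|hk]]; first by left.
        by rewrite in_set0 in H.
      by right; right; apply: known2 hk.
have [hcons _ _] := hsol C n1 s hC hex.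
have n1C : n1 \notin C by rewrite in_setU1 in_setI (negbTE h1) (negbTE hn1) andbF.
have n2C : n2 \notin C by rewrite in_setU1 in_setI (negbTE h2) (negbTE hn2).
have c0 : #|(set0 : {set 'I_N})| <= f by rewrite cards0.
have d1 : dec P1 Pi T n1 s n1 = Marked (Some P1).
  have [_ L _] := hsol set0 n1 s1 c0 e1.
  rewrite /dec (@view_eq N s s1 n1 T); last by move=> t sdr h; apply: inbox1.
  exact: L.
have d2 : dec P1 Pi T n1 s n2 = Marked (Some P1).
  have [_ L _] := hsol set0 n2 s2 c0 e2.
  move: (L (n0 _) (n0 _)); rewrite /dec /input (negbTE h2) => <-.
  rewrite (@view_eq N s s2 n2 T) //; by move=> t sdr h; apply: inbox2.
have := hcons n1 n2 n1C n2C; rewrite d1 d2 => /(_ isT isT) E.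
by rewrite E eqxx in h12.
Qed.
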